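(* Let $n,m$ be fixed, $V^*\subset V_1\cap V_2$ fixed, $W$ an obfuscating set and $\mathfrak{o}\in\mathfrak{O}_W$. Let $F=F^{(n,m)}_{c,\theta}$ be a nominatable distribution supported on $\mathcal{G}^a_{n,m}=\{(g_1,g_2)\in\mathcal{G}_n\times\mathcal{G}_m:\mathcal{I}(v;g_2)=\{v\}\text{ for all }v\in V^*\}$. For $(g_1,g_2)\in\mathcal{G}^a_{n,m}$ let $(g_1,[\mathfrak{o}(g_2)])=\{(g_1,\tilde g_2)\in\mathcal{G}^a_{n,m}:\tilde g_2\simeq g_2\}$, and for $w\in W$, $u\in V_2$ let $(g_1,[\mathfrak{o}(g_2)])_{w=\mathfrak{o}(u)}=\{(g_1,\tilde g_2)\in\mathcal{G}^a_{n,m}:\tilde g_2=\sigma(g_2)$ for some isomorphism $\sigma$ with $\sigma(\mathfrak{o}^{-1}(w))=u\}$, and $(g_1,[\mathfrak{o}(g_2)])_{w\in\mathfrak{o}(S)}=\bigcup_{u\in S}(g_1,[\mathfrak{o}(g_2)])_{w=\mathfrak{o}(u)}$ for $S\subset V_2$. Choose representatives $(g_1^{(i)},g_2^{(i)})$, $i\in[h]$, so that the sets $(g_1^{(i)},[\mathfrak{o}(g_2^{(i)})])$ partition $\mathcal{G}^a_{n,m}$, and for $u\in W$ put $P^i_u=\mathbb{P}_F\big((g_1^{(i)},[\mathfrak{o}(g_2^{(i)})])_{u\in\mathfrak{o}(V^* )}\mid(g_1^{(i)},[\mathfrak{o}(g_2^{(i)})])\big)$. Define $\Phi^*(g_1^{(i)},\mathfrak{o}(g_2^{(i)}),V^*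 )$ to be the ordering of $W$ in which, for each $j=1,\dots,m$, the $j$-th element is a maximizer of $P^i_u$ over $u\in W$ not among the first $j-1$ elements (ties broken in a fixed arbitrary manner); and for any other $(g_1,g_2)$ in the class $(g_1^{(i)},[\mathfrak{o}(g_2^{(i)})])$, choose an isomorphism $\sigma$ with $\mathfrak{o}(g_2)=\sigma(\mathfrak{o}(g_2^{(i)}))$ and set $\Phi^*(g_1,\mathfrak{o}(g_2),V^* )=\sigma(\Phi^*(g_1^{(i)},\mathfrak{o}(g_2^{(i)}),V^* ))$. Then for every $k\in[m-1]$ and every VN scheme $\Phi\in\mathcal{V}_{nm}$, $L^{(1)}_k(\Phi^*,V^* )\le L^{(1)}_k(\Phi,V^* )$ and $L^{(2)}_k(\Phi^*,V^* )\le L^{(2)}_k(\Phi,V^* )$; i.e. $\Phi^*$ is level-$k$ Bayes optimal for both losses simultaneously for all $k$.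
   Context: $\mathcal{G}_n$ is the set of labeled graphs on $n$ vertices and $\simeq$ denotes graph isomorphism. A nominatable distribution $F^{(n,m)}_{c,\theta}$ is a distribution on $\mathcal{G}_n\times\mathcal{G}_m$ with vertex sets $V_1=\{v_1,\dots,v_n\}$, $V_2=\{u_1,\dots,u_m\}$, $v_i=u_i$ for $i\le c$ (the core), disjoint junk sets $V_1\setminus C$, $V_2\setminus C$, whose induced subgraphs are conditionally independent given $\theta$. An obfuscating set $W$ is disjoint from $V_1,V_2$; $\mathfrak{O}_W$ is the set of bijections $\mathfrak{o}:V_2\to W$, and $\mathfrak{o}(g_2)$ is $g_2$ with vertices relabeled by $\mathfrak{o}$. For $u\in V(g)$, $\mathcal{I}(u;g)$ is the orbit of $u$ under automorphisms of $g$. A VN scheme $\Phi\in\mathcal{V}_{nm}$ assigns to $(g_1,\mathfrak{o}(g_2),V^* )$ a total ordering of $W$ such that the set of positions of $\mathfrak{o}(\mathcal{I}(u;g_2))$ does not depend on $\mathfrak{o}\in\mathfrak{O}_W$ (for all $g_1,g_2,V^*,u$). With $(G_1,G_2)\sim F$ and $\mathrm{rank}$ denoting position in the ordering, $L^{(1)}_k(\Phi,V^* )=\frac1{|V^*|}\sum_{v\in V^*}\mathbb{P}(\mathrm{rank}_{\Phi(G_1,\mathfrak{o}(G_2),V^* )}(\mathfrak{o}(v))\ge k+1)$ (recall error) and $L^{(2)}_k(\Phi,V^* )=1-\frac1k\sum_{v\in V^*}\mathbb{P}(\mathrm{rank}_{\Phi(G_1,\mathfrak{o}(G_2),V^* )}(\mathfrak{o}(v))\le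 k)$ (precision error). *)

(* Defs.v *)
From HB Require Import structures.
From mathcomp Require Import all_boot all_order all_algebra all_fingroup.
Set Implicit Arguments. Unset Strict Implicit. Unset Printing Implicit Defensive.
Import Order.TTheory GRing.Theory Num.Theory.
Local Open Scope ring_scope.

Definition graphT (T : finType) := {ffun T * T -> bool}.

Definition is_graph (T : finType) (g : graphT T) : bool :=
  [forall x, ~~ g (x, x)] && [forall x, forall y, g (x, y) == g (y, x)].

(* sigma(g): relabel g by the permutation sigma ((x,y) edge of g iff (sigma x, sigma y) edge) *)
Definition permg (T : finType) (s : {perm T}) (g : graphT T) : graphT T :=
  [ffun p => g ((s^-1)%g p.1, (s^-1)%g p.2)].

Definition isomg (T : finType) (g h : graphT T) : bool :=
  [exists s : {perm T}, h == permg s g].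

Definition vorbit (T : finType) (u : T) (g : graphT T) : {set T} :=
  [set v | [exists s : {perm T}, (permg s g == g) && (s u == v)]].

Definition relabel (A B : finType) (o : A -> B) (g : graphT A) : graphT B :=
  [ffun p => [exists x, exists y, [&& o x == p.1, o y == p.2 & g (x, y)]]].

(* V_1 = 'I_n, V_2 = 'I_m; vertex i of V_1 equals vertex i of V_2 iff i < c (the core) *)
Definition in_core (m c : nat) (S : {set 'I_m}) : bool := [forall v in S, (v < c)%N].
Definition junk (k c : nat) : {set 'I_k} := [set i : 'I_k | (c <= i)%N].

(* induced subgraph g[J] (as a relation on the whole vertex type, empty outside J) *)
Definition restrict (T : finType) (J : {set T}) (g : graphT T) : graphT T :=
  [ffun p => [&& p.1 \in J, p.2 \in J & g p]].

Definition pairG (n m : nat) := (graphT 'I_n * graphT 'I_m)%type.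

Section Prob.
Variable R : realFieldType.
Variables n m : nat.

Definition is_distr (F : {ffun pairG n m -> R}) : Prop :=
  (forall x, 0 <= F x) /\ \sum_x F x = 1.

Definition prob (F : {ffun pairG n m -> R}) (E : pred (pairG n m)) : R :=
  \sum_(x | E x) F x.

Definition supported_on (F : {ffun pairG n m -> R}) (E : pred (pairG n m)) : Prop :=
  forall x, ~~ E x -> F x = 0.

(* nominatable distribution F^{(n,m)}_{c,theta} (theta fixed): a distribution on
   G_n x G_m whose junk-induced subgraphs are independent (given the fixed theta) *)
Definition nominatable (c : nat) (F : {ffun pairG n m -> R}) : Prop :=
  [/\ (c <= n)%N, (c <= m)%N, is_distr F,
      supported_on F (fun x => is_graph x.1 && is_graph x.2) &
      forall (a : graphT 'I_n) (b : graphT 'I_m),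
        prob F (fun x => (restrict (junk n c) x.1 == a) && (restrict (junk m c) x.2 == b))
        = prob F (fun x => restrict (junk n c) x.1 == a)
          * prob F (fun x => restrict (junk m c) x.2 == b)].

Definition Ga (Vs : {set 'I_m}) : pred (pairG n m) :=
  fun x => [&& is_graph x.1, is_graph x.2 & [forall v in Vs, vorbit v x.2 == [set v]]].

Variable W : finType.

(* a VN scheme: (g1, o(g2), V^* ) |-> total ordering of W (a duplicate-free enumeration
   of W; the element at 0-based position j has rank j+1) *)
Definition scheme := graphT 'I_n -> graphT W -> {set 'I_m} -> seq W.

Definition is_VN (c : nat) (Phi : scheme) : Prop :=
  (forall g1 gW Vs, is_graph g1 -> is_graph gW -> in_core c Vs ->
     perm_eq (Phi g1 gW Vs) (enum W)) /\
  (forall g1 g2 Vs (u : 'I_m) (o o' : 'I_m -> W),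
     is_graph g1 -> is_graph g2 -> in_core c Vs -> injective o -> injective o' ->
     forall i : nat,
       [exists x in vorbit u g2, index (o x) (Phi g1 (relabel o g2) Vs) == i]
       = [exists x in vorbit u g2, index (o' x) (Phi g1 (relabel o' g2) Vs) == i]).

(* L^{(1)}_k : rank(o v) >= k+1  iff  0-based index >= k *)
Definition L1 (F : {ffun pairG n m -> R}) (o : 'I_m -> W) (Phi : scheme)
    (Vs : {set 'I_m}) (k : nat) : R :=
  (#|Vs|%:R)^-1 * \sum_(v in Vs)
     prob F (fun x => (k <= index (o v) (Phi x.1 (relabel o x.2) Vs))%N).

(* L^{(2)}_k : rank(o v) <= k  iff  0-based index < k *)
Definition L2 (F : {ffun pairG n m -> R}) (o : 'I_m -> W) (Phi : scheme)
    (Vs : {set 'I_m}) (k : nat) : R :=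
  1 - (k%:R)^-1 * \sum_(v in Vs)
     prob F (fun x => (index (o v) (Phi x.1 (relabel o x.2) Vs) < k)%N).

Definition classOf (Vs : {set 'I_m}) (x : pairG n m) : pred (pairG n m) :=
  fun y => [&& Ga Vs y, y.1 == x.1 & isomg x.2 y.2].

(* (g1,[o(g2)])_{w = o(u)} : sigma(o^{-1}(w)) = u  iff  w = o(sigma^{-1}(u)) *)
Definition subEq (o : 'I_m -> W) (Vs : {set 'I_m}) (x : pairG n m) (w : W) (u : 'I_m)
  : pred (pairG n m) :=
  fun y => [&& Ga Vs y, y.1 == x.1 &
     [exists s : {perm 'I_m}, (y.2 == permg s x.2) && (w == o ((s^-1)%g u))]].

Definition subIn (o : 'I_m -> W) (Vs : {set 'I_m}) (x : pairG n m) (w : W)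
  : pred (pairG n m) :=
  fun y => [exists u in Vs, subEq o Vs x w u y].

Definition Pcond (F : {ffun pairG n m -> R}) (o : 'I_m -> W) (Vs : {set 'I_m})
    (x : pairG n m) (w : W) : R :=
  prob F (subIn o Vs x w) / prob F (classOf Vs x).

Definition greedy (P : W -> R) (s : seq W) : Prop :=
  perm_eq s (enum W) /\
  forall (j : nat) (w : W), (j < size s)%N -> w \notin take j s -> P w <= P (nth w s j).

(* Phi^* as constructed in the theorem, for some choice of class representatives
   (rep), tie-breaking, and isomorphisms sigma *)
Definition is_Phi_star (F : {ffun pairG n m -> R}) (o : 'I_m -> W) (Vs : {set 'I_m})
    (Phis : scheme) : Prop :=
  exists rep : pairG n m -> pairG n m,
  [/\ (forall x, Ga Vs x -> classOf Vs x (rep x)),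
      (forall x y, Ga Vs x -> classOf Vs x y -> rep y = rep x),
      (forall x, Ga Vs x -> rep x = x ->
         greedy (Pcond F o Vs x) (Phis x.1 (relabel o x.2) Vs)) &
      (forall x, Ga Vs x -> exists s : {perm W},
         relabel o x.2 = permg s (relabel o (rep x).2) /\
         Phis x.1 (relabel o x.2) Vs = map s (Phis (rep x).1 (relabel o (rep x).2) Vs))].

End Prob.

(* Main.v *)
Require Import Defs.
From HB Require Import structures.
From mathcomp Require Import all_boot all_order all_algebra all_fingroup.
From mathcomp Require Import zify ring lra.
Import Order.TTheory GRing.Theory Num.Theory.
Local Open Scope ring_scope.
Set Implicit Arguments. Unset Strict Implicit.

Lemma permgM (T : finType) (a b : {perm T}) (g : graphT T) :
  permg a (permg b g) = permg (b * a)%g g.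
Proof. by apply/ffunP => p; rewrite !ffunE /= invMg !permM. Qed.

Lemma permg1 (T : finType) (g : graphT T) : permg 1%g g = g.
Proof. by apply/ffunP => -[x y]; rewrite !ffunE /= invg1 !perm1. Qed.

Lemma permgK (T : finType) (s : {perm T}) (g : graphT T) :
  permg (s^-1)%g (permg s g) = g.
Proof. by rewrite permgM mulgV permg1. Qed.

Lemma isomg_sym (T : finType) (g h : graphT T) : isomg g h -> isomg h g.
Proof.
case/existsP=> s /eqP ->; apply/existsP; exists (s^-1)%g; by rewrite permgK.
Qed.

Lemma relabel_permg (A B : finType) (f : A -> B) (t : {perm A}) (g : graphT A) :
  relabel f (permg t g) = relabel (fun z => f (t z)) g.
Proof.
apply/ffunP => p; rewrite !ffunE; apply/existsP/existsP.
- case=> x /existsP [y]; rewrite ffunE /= => /and3P [h1 h2 h3].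
  exists ((t^-1)%g x); apply/existsP; exists ((t^-1)%g y); by rewrite !permKV h1 h2.
- case=> x /existsP [y] /and3P [h1 h2 h3].
  exists (t x); apply/existsP; exists (t y); by rewrite ffunE /= !permK h1 h2.
Qed.

Lemma permg_relabel (A B : finType) (f : A -> B) (s : {perm B}) (g : graphT A) :
  permg s (relabel f g) = relabel (fun z => s (f z)) g.
Proof.
apply/ffunP => p; rewrite !ffunE; apply/existsP/existsP.
- case=> x /existsP [y] /and3P [/eqP h1 /eqP h2 h3].
  exists x; apply/existsP; exists y; by rewrite h1 h2 !permKV !eqxx.
- case=> x /existsP [y] /and3P [/eqP h1 /eqP h2 h3].
  exists x; apply/existsP; exists y; by rewrite -h1 -h2 !permK !eqxx.
Qed.

Lemma eq_relabel (A B : finType) (f f' : A -> B) (g : graphT A) :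
  f =1 f' -> relabel f g = relabel f' g.
Proof.
move=> e; apply/ffunP => p; rewrite !ffunE.
by apply: eq_existsb => x; apply: eq_existsb => y; rewrite !e.
Qed.

Lemma relabel_at (A B : finType) (f : A -> B) (g : graphT A) a b :
  injective f -> relabel f g (f a, f b) = g (a, b).
Proof.
move=> fi; rewrite ffunE; apply/existsP/idP.
- by case=> x /existsP [y] /and3P [/eqP /fi -> /eqP /fi ->].
- by move=> h; exists a; apply/existsP; exists b; rewrite !eqxx h.
Qed.

Lemma relabel_inj (A B : finType) (f : A -> B) (g h : graphT A) :
  injective f -> relabel f g = relabel f h -> g = h.
Proof.
move=> fi e; apply/ffunP => -[a b].
by rewrite -(relabel_at g a b fi) -(relabel_at h a b fi) e.
Qed.

Lemma is_graph_relabel (A B : finType) (f : A -> B) (g : graphT A) :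
  injective f -> is_graph g -> is_graph (relabel f g).
Proof.
move=> fi /andP [/forallP irr /forallP sym]; apply/andP; split.
- apply/forallP => x; rewrite ffunE; apply/negP => /existsP [a] /existsP [b].
  rewrite /=; case/and3P => /eqP h1 /eqP h2; rewrite -h2 in h1; move/fi: h1 => ->.
  by rewrite (negbTE (irr b)).
- apply/forallP => x; apply/forallP => y; rewrite !ffunE; apply/eqP.
  apply/existsP/existsP.
  + case=> a /existsP [b] /and3P [h1 h2 h3]; exists b; apply/existsP; exists a.
    by rewrite h1 h2 /= -(eqP (forallP (sym a) b)).
  + case=> a /existsP [b] /and3P [h1 h2 h3]; exists b; apply/existsP; exists a.
    by rewrite h1 h2 /= -(eqP (forallP (sym a) b)).
Qed.

Lemma orbit_triv (T : finType) (g x2 : graphT T) (s t : {perm T}) (u : T) :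
  x2 = permg s g -> x2 = permg t g -> vorbit u x2 = [set u] ->
  (s^-1)%g u = (t^-1)%g u.
Proof.
move=> es et ov.
have : t ((s^-1)%g u) \in vorbit u x2.
  rewrite /vorbit inE; apply/existsP; exists (s^-1 * t)%g.
  apply/andP; split; last by rewrite permM.
  apply/eqP; rewrite [in LHS]es permgM mulgA mulgV mul1g -et //.
rewrite ov inE => /eqP /(congr1 (fun z => (t^-1)%g z)); by rewrite permK.
Qed.

Lemma swap_sum (R : realFieldType) (W : finType) (P : W -> R) (S T : {set W}) :
  (forall w, 0 <= P w) -> (#|S| <= #|T|)%N ->
  (forall w w', w \notin T -> w' \in T -> P w <= P w') ->
  \sum_(w in S) P w <= \sum_(w in T) P w.
Proof.
move=> P0 cST Hex.
rewrite (big_setID (A:=S) T) (big_setID (A:=T) S) /= setIC lerD2l.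
have cab : (#|S :\: T| <= #|T :\: S|)%N.
  move: cST; rewrite -(cardsID T S) -(cardsID S T) setIC; lia.
have key : (#|T :\: S|%:R * \sum_(w in S :\: T) P w <=
            #|S :\: T|%:R * \sum_(w in T :\: S) P w :> R).
  rewrite mulr_natl mulr_natl -!sumrMnl.
  have e1 : forall (A B : {set W}), \sum_(i in A) P i *+ #|B| = \sum_(i in A) \sum_(j in B) P i.
    by move=> A B; apply: eq_bigr => i _; rewrite sumr_const.
  rewrite !e1.
  rewrite exchange_big /=; apply: ler_sum => i iTS; apply: ler_sum => j jST.
  move: iTS jST; rewrite !inE => /andP [_ iT] /andP [jnT _]; exact: Hex.
have Y0 : 0 <= \sum_(w in T :\: S) P w by apply: sumr_ge0.
case: (posnP #|T :\: S|) => [b0|bpos].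
  have : #|S :\: T| = 0%N by lia.
  move/eqP; rewrite cards_eq0 => /eqP ->; by rewrite big_set0.
have bR : (0 : R) < #|T :\: S|%:R by rewrite ltr0n.
rewrite -(ler_pM2l bR); apply: (le_trans key).
by apply: ler_wpM2r => //; rewrite ler_nat.
Qed.

Lemma card_topk (W : finType) (L : seq W) k :
  perm_eq L (enum W) -> (k <= #|W|)%N -> #|[set w | (index w L < k)%N]| = k.
Proof.
move=> pL kW.
have memL w : w \in L by rewrite (perm_mem pL) mem_enum.
have -> : [set w | (index w L < k)%N] = [set w in take k L].
  by apply/setP => w; rewrite !inE in_take.
rewrite cardsE (card_uniqP _) ?take_uniq ?(perm_uniq pL) ?enum_uniq //.
by rewrite size_takel // (perm_size pL) -cardE.
Qed.

Lemma topk (R : realFieldType) (W : finType) (P : W -> R) (L G : seq W) k :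
  (forall w, 0 <= P w) -> perm_eq L (enum W) -> greedy P G -> (k <= #|W|)%N ->
  \sum_w (if (index w L < k)%N then P w else 0)
  <= \sum_w (if (index w G < k)%N then P w else 0).
Proof.
move=> P0 pL [pG Hg] kW.
rewrite -!big_mkcond /=.
have e : forall L', \sum_(w | (index w L' < k)%N) P w
   = \sum_(w in [set w | (index w L' < k)%N]) P w.
  by move=> L'; apply: eq_bigl => w; rewrite inE.
rewrite !e; apply: swap_sum => //.
  by rewrite !card_topk.
move=> w w'; rewrite !inE -leqNgt => wk w'k.
have memG x : x \in G by rewrite (perm_mem pG) mem_enum.
have sG : size G = #|W| by rewrite (perm_size pG) -cardE.
have := Hg (index w' G) w.
rewrite nth_index // in_take // -leqNgt; apply; lia.
Qed.

Lemma subIn_class (n m : nat) (W : finType) (o : 'I_m -> W) (Vs : {set 'I_m})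
   (r y : pairG n m) w :
  subIn o Vs r w y -> classOf Vs r y.
Proof.
case/existsP=> u /andP [_ /and3P [Gy e1 /existsP [s /andP [/eqP e2 _]]]].
by rewrite /classOf Gy e1 /isomg; apply/existsP; exists s; rewrite e2.
Qed.

Lemma subIn_img (n m : nat) (W : finType) (o : 'I_m -> W) (Vs : {set 'I_m})
   (r y : pairG n m) (t : {perm 'I_m}) w :
  classOf Vs r y -> y.2 = permg t r.2 ->
  subIn o Vs r w y = (w \in [set o ((t^-1)%g u) | u in Vs]).
Proof.
case/and3P=> Gy e1 _ et; apply/existsP/imsetP.
- case=> u /andP [uV /and3P [_ _ /existsP [s /andP [/eqP es /eqP ->]]]].
  exists u => //; congr o; apply: (orbit_triv es et).
  by case/and3P: Gy => _ _ /forallP /(_ u); rewrite uV => /eqP.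
- case=> u uV ->; exists u; rewrite uV /subEq Gy e1 /=.
  by apply/existsP; exists t; rewrite -et !eqxx.
Qed.

Lemma decomp (R : realFieldType) (n m : nat) (W : finType) (F : {ffun pairG n m -> R})
    (Vs : {set 'I_m}) (o : 'I_m -> W) (Phi : scheme n m W) (k : nat)
    (rep : pairG n m -> pairG n m) :
  injective o -> supported_on F (Ga Vs) ->
  (forall x, Ga Vs x -> classOf Vs x (rep x)) ->
  (forall x y, Ga Vs x -> classOf Vs x y -> rep y = rep x) ->
  (forall r y, Ga Vs r -> rep r = r -> classOf Vs r y ->
     exists t : {perm 'I_m}, y.2 = permg t r.2 /\
       forall v, v \in Vs -> index (o v) (Phi y.1 (relabel o y.2) Vs)
                          = index (o ((t^-1)%g v)) (Phi r.1 (relabel o r.2) Vs)) ->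
  \sum_(v in Vs) prob F (fun x => (index (o v) (Phi x.1 (relabel o x.2) Vs) < k)%N)
  = \sum_(r | Ga Vs r && (rep r == r))
      \sum_w (if (index w (Phi r.1 (relabel o r.2) Vs) < k)%N
              then prob F (subIn o Vs r w) else 0).
Proof.
move=> oi supp Hrep1 Hrep2 Ht.
rewrite /prob.
under eq_bigr => v _ do rewrite big_mkcond /=.
rewrite exchange_big /=.
rewrite (bigID (Ga Vs)) /= [X in _ + X]big1 ?addr0; last first.
  move=> x nG; rewrite supp //; by apply: big1 => v _; case: ifP.
rewrite (partition_big rep (fun r => Ga Vs r && (rep r == r))) /=; last first.
  move=> x Gx; have := Hrep1 x Gx; case/and3P=> Gr _ _.
  by rewrite Gr /= (Hrep2 x (rep x) Gx (Hrep1 x Gx)).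
apply: eq_bigr => r /andP [Gr /eqP rr].
have cl : forall x, (Ga Vs x && (rep x == r)) = classOf Vs r x.
  move=> x; apply/idP/idP.
  - case/andP=> Gx /eqP <-; have := Hrep1 x Gx; case/and3P=> _ e1 iso.
    rewrite /classOf Gx eq_sym e1 /=; exact: isomg_sym.
  - move=> c; have := c; case/and3P=> Gx _ _.
    by rewrite Gx (Hrep2 r x Gr c) rr eqxx.
rewrite (eq_bigl _ _ cl).
set c := fun w => (index w (Phi r.1 (relabel o r.2) Vs) < k)%N.
transitivity (\sum_(x | classOf Vs r x) \sum_w
     (if c w then (if subIn o Vs r w x then F x else 0) else 0)).
  apply: eq_bigr => y cy.
  have [t [et Hi]] := Ht r y Gr rr cy.
  under [in RHS]eq_bigr => w _ do rewrite (subIn_img o w cy et).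
  transitivity (\sum_w (if w \in [set o ((t^-1)%g u) | u in Vs]
                      then (if c w then F y else 0) else 0)).
    rewrite -big_mkcond /= big_imset /=; last first.
      by move=> a b _ _ /oi /perm_inj.
    by apply: eq_bigr => v vV; rewrite Hi.
  by apply: eq_bigr => w _; case: (c w); case: (_ \in _).
rewrite exchange_big /=; apply: eq_bigr => w _.
rewrite /c; case: ifP => _; last by rewrite big1.
rewrite [RHS]big_mkcond [LHS]big_mkcond /=; apply: eq_bigr => x _.
case sx: (subIn o Vs r w x); last by case: ifP.
by rewrite (subIn_class sx).
Qed.
Unset Implicit Arguments. Set Strict Implicit.

Lemma prob_compl (R : realFieldType) (n m : nat) (F : {ffun pairG n m -> R}) (E : pred (pairG n m)) :
  is_distr F -> prob F (fun x => ~~ E x) = 1 - prob F E.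
Proof.
case=> _ s1; rewrite /prob -s1 [\sum_x _](bigID E) /= addrC addrK.
by [].
Qed.

Theorem mainTheorem3 (R : realFieldType) (n m c : nat) (W : finType)
    (F : {ffun pairG n m -> R}) (Vs : {set 'I_m}) (o : 'I_m -> W)
    (Phis : scheme n m W) :
  #|W| = m -> injective o -> in_core c Vs ->
  nominatable c F -> supported_on F (Ga Vs) ->
  is_Phi_star F o Vs Phis ->
  forall (k : nat), (1 <= k)%N -> (k <= m - 1)%N ->
  forall Phi : scheme n m W, is_VN c Phi ->
    L1 F o Phis Vs k <= L1 F o Phi Vs k /\ L2 F o Phis Vs k <= L2 F o Phi Vs k.
Proof.
move=> hW oi core nom supp [rep [H1 H2 H3 H4]] k k1 km Phi [VN1 VN2].
have [_ _ dF _ _] := nom.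
have F0 : forall x, 0 <= F x by case: dF.
have obij : bijective o by apply: inj_card_bij => //; rewrite card_ord hW.
case: obij => oinv oK oinvK.
have key : \sum_(v in Vs) prob F (fun x => (index (o v) (Phi x.1 (relabel o x.2) Vs) < k)%N)
        <= \sum_(v in Vs) prob F (fun x => (index (o v) (Phis x.1 (relabel o x.2) Vs) < k)%N).
  have HPhi : forall r y, Ga Vs r -> rep r = r -> classOf Vs r y ->
     exists t : {perm 'I_m}, y.2 = permg t r.2 /\
       forall v, v \in Vs -> index (o v) (Phi y.1 (relabel o y.2) Vs)
                          = index (o ((t^-1)%g v)) (Phi r.1 (relabel o r.2) Vs).
    move=> r y Gr rr cy; case/and3P: (cy) => Gy /eqP e1 /existsP [t /eqP et].
    exists t; split => // v vV.
    have Gy' := Gy; case/and3P: Gy' => gy1 gy2 /forallP /(_ v); rewrite vV => /eqP ov.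
    have o'i : injective (fun z => o ((t^-1)%g z)) by move=> a b /oi /perm_inj.
    have := VN2 y.1 y.2 Vs v o _ gy1 gy2 core oi o'i (index (o v) (Phi y.1 (relabel o y.2) Vs)).
    rewrite ov.
    have -> : [exists x in [set v], index (o x) (Phi y.1 (relabel o y.2) Vs) ==
        index (o v) (Phi y.1 (relabel o y.2) Vs)].
      by apply/existsP; exists v; rewrite inE !eqxx.
    move/esym/existsP => [x /andP [/set1P -> /eqP <-]].
    rewrite e1; congr (index _ (Phi _ _ _)).
    rewrite et relabel_permg; apply: eq_relabel => z; by rewrite permK.
  have HPhis : forall r y, Ga Vs r -> rep r = r -> classOf Vs r y ->
     exists t : {perm 'I_m}, y.2 = permg t r.2 /\
       forall v, v \in Vs -> index (o v) (Phis y.1 (relabel o y.2) Vs)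
                          = index (o ((t^-1)%g v)) (Phis r.1 (relabel o r.2) Vs).
    move=> r y Gr rr cy; case/and3P: (cy) => Gy /eqP e1 _.
    have ry : rep y = r by rewrite (H2 r y Gr cy) rr.
    have [sW [eg eP]] := H4 y Gy; rewrite ry in eg eP.
    have tfi : injective (fun z => oinv (sW (o z))).
      by move=> a b /(congr1 o); rewrite !oinvK => /perm_inj /oi.
    pose t := perm tfi.
    have ot : forall z, o (t z) = sW (o z) by move=> z; rewrite permE /= oinvK.
    have et : y.2 = permg t r.2.
      apply: (relabel_inj oi); rewrite eg permg_relabel relabel_permg.
      by apply: eq_relabel => z; rewrite ot.
    exists t; split => // v vV.
    rewrite eP.
    have -> : o v = sW (o ((t^-1)%g v)) by rewrite -ot permKV.
    by rewrite index_map //; apply: perm_inj.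
  rewrite (@decomp _ _ _ _ F Vs o Phi k rep oi supp H1 H2 HPhi).
  rewrite (@decomp _ _ _ _ F Vs o Phis k rep oi supp H1 H2 HPhis).
  apply: ler_sum => r /andP [Gr /eqP rr].
  set D := prob F (classOf Vs r).
  have D0 : 0 <= D by apply: sumr_ge0.
  have NumE : forall w, prob F (subIn o Vs r w) = D * Pcond F o Vs r w.
    move=> w; rewrite /Pcond -/D.
    have le : prob F (subIn o Vs r w) <= D.
      rewrite /D /prob [X in _ <= X]big_mkcond [X in X <= _]big_mkcond /=.
      apply: ler_sum => x _; case sx: (subIn o Vs r w x).
        by rewrite (subIn_class sx).
      by case: ifP.
    have ge : 0 <= prob F (subIn o Vs r w) by apply: sumr_ge0.
    have [D00|Dn0] := eqVneq D 0.
      rewrite D00 mul0r; lra.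
    by rewrite mulrC divfK.

  have fact : forall L : seq W, \sum_w (if (index w L < k)%N then prob F (subIn o Vs r w) else 0)
     = D * \sum_w (if (index w L < k)%N then Pcond F o Vs r w else 0).
    move=> L; rewrite mulr_sumr; apply: eq_bigr => w _; rewrite NumE.
    by case: ifP; rewrite ?mulr0.
  rewrite !fact; apply: ler_wpM2l => //.
  have Gr' := Gr; case/and3P: Gr' => g1 g2 _.
  apply: topk.
  - move=> w; apply: divr_ge0 => //; apply: sumr_ge0 => *; exact: F0.
  - apply: VN1 => //; exact: is_graph_relabel.
  - exact: H3.
  - rewrite hW; lia.
have hc : forall Ph : scheme n m W,
  \sum_(v in Vs) prob F (fun x => (k <= index (o v) (Ph x.1 (relabel o x.2) Vs))%N)
  = #|Vs|%:R - \sum_(v in Vs) prob F (fun x => (index (o v) (Ph x.1 (relabel o x.2) Vs) < k)%N).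
  move=> Ph; rewrite -sumr_const -sumrB; apply: eq_bigr => v _.
  rewrite -prob_compl //; rewrite /prob; apply: eq_bigl => x; by rewrite leqNgt.
rewrite /L1 /L2 !hc; split.
  apply: ler_wpM2l; first by rewrite invr_ge0 ler0n.
  lra.
have := ler_wpM2l (x := (k%:R)^-1 : R) _ key.
rewrite invr_ge0 ler0n => /(_ isT); lra.
Qed.
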